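(* Fix integers $N\ge 2$ and $K\ge 1$. For any Boolean tensor $\mathcal{B}\in\{0,1\}^{N\times N\times K}$ with frontal slices $\mathbf{B}_1,\dots,\mathbf{B}_K$, and any $r\in\mathbb{N}^+$ with \[ r\ge\min\Big\{N,\;2\sum_{k=1}^K\mathrm{rrank}(\mathbf{B}_k)\Big\},\] the set $\pi(\mathcal{M}^{\text{RESCAL}}_r)$ contains a ranking tensor consistent with $\mathcal{B}$.
   Context: A score-based model assigns a score $s_k(i,j)\in\mathbb{R}$ to each triple, $i,j\in\{1,\dots,N\}$, $k\in\{1,\dots,K\}$; its scoring tensor has frontal slices $\mathbf{S}_k$ with $[\mathbf{S}_k]_{ij}=s_k(i,j)$. For a real $N\times N$ matrix $\mathbf{S}$, $\pi(\mathbf{S})$ is the matrix of dense ranks: $\pi_{ij}(\mathbf{S})=1+$ (number of distinct values among entries of $\mathbf{S}$ strictly larger than $s_{ij}$). For tensors, $\pi$ acts slicewise; for a set $X$, $\pi(X)=\{\pi(x):x\in X\}$. RESCAL of size $r$: parameters $\mathbf{A}\in\mathbb{R}^{N\times r}$ (rows $\mathbf{a}_i$), $\mathbf{R}_1,\dots,\mathbf{R}_K\in\mathbb{R}^{r\times r}$, score $\mathbf{a}_i^T\mathbf{R}_k\mathbf{a}_j$; $\mathcal{M}^{\text{RESCAL}}_r$ is the set of scoring tensors of such models. A ranking tensor $\mathcal{P}$ is consistent with $\mathcal{B}$ if for every $k$ and all $i,j,i',j'$: $b_{ijk}=1$ and $b_{i'j'k}=0$ imply $p_{ijk}<p_{i'j'k}$.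 Rounding rank: for a real matrix, $\mathrm{round}$ maps each entry $x$ to $1$ if $x\ge 1/2$ and to $0$ otherwise; for a Boolean matrix $\mathbf{B}\in\{0,1\}^{m\times n}$, $\mathrm{rrank}(\mathbf{B})=\min\{\mathrm{rank}(\mathbf{A}):\mathbf{A}\in\mathbb{R}^{m\times n},\ \mathrm{round}(\mathbf{A})=\mathbf{B}\}$. *)

(* Defs.v *)
From HB Require Import structures.
From mathcomp Require Import all_boot all_order all_algebra.
From mathcomp Require Import boolp reals.
Set Implicit Arguments. Unset Strict Implicit. Unset Printing Implicit Defensive.
Import Order.TTheory GRing.Theory Num.Theory.
Local Open Scope ring_scope.

Definition round_mx (R : realType) (m n : nat) (A : 'M[R]_(m, n)) : 'M[bool]_(m, n) :=
  map_mx (fun x => (2%:R^-1 <= x)) A.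

Definition has_rounding_rank (R : realType) (m n : nat) (B : 'M[bool]_(m, n)) (k : nat) : bool :=
  `[< exists A : 'M[R]_(m, n), round_mx A = B /\ \rank A = k >].

Lemma has_rounding_rank_ex (R : realType) (m n : nat) (B : 'M[bool]_(m, n)) :
  exists k, has_rounding_rank R B k.
Proof.
exists (\rank (map_mx (fun b : bool => (b%:R : R)) B)).
apply/asboolP; eexists; split; last reflexivity.
apply/matrixP => i j; rewrite !mxE.
case: (B i j) => /=.
- by rewrite invf_le1 ?ler1n // ltr0n.
- by apply/negbTE; rewrite -ltNge invr_gt0 ltr0n.
Qed.

Definition rrank (R : realType) (m n : nat) (B : 'M[bool]_(m, n)) : nat :=
  ex_minn (has_rounding_rank_ex R B).

Definition entries (R : realType) (N : nat) (S : 'M[R]_N) : seq R :=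
  [seq S ij.1 ij.2 | ij : 'I_N * 'I_N].

Definition dense_rank (R : realType) (N : nat) (S : 'M[R]_N) : 'M[nat]_N :=
  \matrix_(i, j) (size (undup [seq x <- entries S | S i j < x])).+1.

Definition rescal_score (R : realType) (N K r : nat)
  (A : 'M[R]_(N, r)) (Rs : 'I_K -> 'M[R]_r) : 'I_K -> 'M[R]_N :=
  fun k => \matrix_(i, j) (row i A *m Rs k *m (row j A)^T) 0 0.

Definition consistent (N K : nat) (P : 'I_K -> 'M[nat]_N) (B : 'I_K -> 'M[bool]_N) : Prop :=
  forall k (i j i' j' : 'I_N), B k i j = true -> B k i' j' = false ->
    (P k i j < P k i' j')%N.

(* Main.v *)
Require Import Defs.
From HB Require Import structures.
From mathcomp Require Import all_boot all_order all_algebra.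
From mathcomp Require Import boolp reals.
Import Order.TTheory GRing.Theory Num.Theory.
Set Implicit Arguments. Unset Strict Implicit. Unset Printing Implicit Defensive.
Local Open Scope ring_scope.

Lemma dense_rank_lt (R : realType) (N : nat) (S : 'M[R]_N) i j i' j' :
  S i' j' < S i j -> (dense_rank S i j < dense_rank S i' j')%N.
Proof.
move=> lt; rewrite !mxE ltnS.
set s1 := undup _; set s2 := undup _.
have Hin : S i j \in entries S.
  by apply/mapP; exists (i, j); rewrite ?mem_enum.
have U : uniq (S i j :: s1).
  by rewrite /= undup_uniq andbT mem_undup mem_filter ltxx.
have Sub : {subset S i j :: s1 <= s2}.
  move=> x; rewrite inE mem_undup mem_filter mem_undup mem_filter.
  case/orP => [/eqP -> | /andP [lx ->]]; first by rewrite lt Hin.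
  by rewrite (lt_trans lt lx).
by have := uniq_leq_size U Sub.
Qed.

Lemma score_eq (R : realType) (N r : nat) (A : 'M[R]_(N, r)) (X : 'M[R]_r) i j :
  (row i A *m X *m (row j A)^T) 0 0 = (A *m X *m A^T) i j.
Proof.
rewrite -row_mul tr_row !mxE; apply: eq_bigr => l _; rewrite !mxE; congr (_ * _).
Qed.

Lemma reduce (R : realType) (N K r : nat) (B : 'I_K -> 'M[bool]_N) s
  (W : 'M[R]_(N, s)) (Q : 'I_K -> 'M[R]_s) : (s <= r)%N ->
  (forall k i j i' j', B k i j -> ~~ B k i' j' ->
     (W *m Q k *m W^T) i' j' < (W *m Q k *m W^T) i j) ->
  exists (A : 'M[R]_(N, r)) (Rs : 'I_K -> 'M[R]_r),
    consistent (fun k => dense_rank (rescal_score A Rs k)) B.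
Proof.
move=> hs H.
pose P : 'M[R]_(s, r) := pid_mx s.
have HP : P *m P^T = 1%:M.
  by rewrite /P tr_pid_mx mul_pid_mx minnn (minn_idPr hs) pid_mx_1.
exists (W *m P), (fun k => P^T *m Q k *m P).
move=> k i j i' j' h1 h2; apply: dense_rank_lt.
have E : forall a b, rescal_score (W *m P) (fun k => P^T *m Q k *m P) k a b
   = (W *m Q k *m W^T) a b.
  move=> a b; rewrite /rescal_score mxE score_eq.
  rewrite trmx_mul !mulmxA -(mulmxA W) HP mulmx1 -(mulmxA _ P) HP mulmx1.
  done.
rewrite !E; apply: H => //; by rewrite h2.
Qed.

Lemma key (R : realType) (N K : nat) (q : 'I_K -> nat)
  (U V : forall k, 'M[R]_(N, q k)) k :
  let W := row_mx (\mxrow_j U j) (\mxrow_j V j) in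
  let Q := block_mx 0 (\mxdiag_j (((j == k)%:R)%:M : 'M[R]_(q j))) 0 0 in
  W *m Q *m W^T = U k *m (V k)^T.
Proof.
move=> W Q.
rewrite /W /Q mul_row_block !mulmx0 !addr0. idtac.
rewrite tr_row_mx mul_row_col mul0mx add0r.
rewrite mul_mxrow_mxdiag tr_mxrow mul_mxrow_mxcol.
rewrite (bigD1 k) //= big1 ?addr0; first by rewrite eqxx mulmx1.
by move=> j /negbTE ->; rewrite (_ : (false%:R)%:M = 0) ?mulmx0 ?mul0mx //; apply/matrixP => a b; rewrite !mxE mul0rn.
Qed.

Theorem theorem11 (R : realType) (N K : nat) (HN : (2 <= N)%N) (HK : (1 <= K)%N)
  (B : 'I_K -> 'M[bool]_N) (r : nat) (Hr : (0 < r)%N)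
  (Hrr : (minn N (2 * \sum_(k < K) rrank R (B k)) <= r)%N) :
  exists (A : 'M[R]_(N, r)) (Rs : 'I_K -> 'M[R]_r),
    consistent (fun k => dense_rank (rescal_score A Rs k)) B.
Proof.
case: (leqP N r) => hNr.
  apply: (@reduce R N K r B N 1%:M (fun k => map_mx (fun b : bool => (b%:R : R)) (B k)) hNr).
  move=> k i j i' j' h1 h2.
  by rewrite mul1mx trmx1 mulmx1 !mxE h1 (negbTE h2) ltr01.
have hX : (2 * \sum_(k < K) rrank R (B k) <= r)%N.
  move: Hrr; rewrite geq_min leqNgt hNr orFb //.
have : forall k, exists M : 'M[R]_N, round_mx M = B k /\ \rank M = rrank R (B k).
  move=> k; rewrite /rrank; case: ex_minnP => m /asboolP [A [h1 h2]] _.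
  by exists A.
case/choice => M HM.
pose q k := \rank (M k).
have hs : ((\sum_k q k) + (\sum_k q k) <= r)%N.
  rewrite addnn -mul2n; apply: leq_trans hX; rewrite leq_mul2l; apply/orP; right.
  by rewrite leq_eqVlt; apply/orP; left; apply/eqP; apply: eq_bigr => k _; rewrite /q (proj2 (HM k)).
apply: (@reduce R N K r B _ (row_mx (\mxrow_j col_base (M j)) (\mxrow_j (row_base (M j))^T))
   (fun k => block_mx 0 (\mxdiag_j (((j == k)%:R)%:M : 'M[R]_(q j))) 0 0) hs).
move=> k i j i' j' h1 h2.
rewrite key trmxK mulmx_base.
have E : forall a b, B k a b = (2%:R^-1 <= M k a b).
  by move=> a b; rewrite -(proj1 (HM k)) /round_mx mxE.
rewrite E in h1; rewrite E -ltNge in h2.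
exact: lt_le_trans h2 h1.
Qed.
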